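(* For every $n\ge1$ and every $\pi\in S_n$, $\pi$ is $321$-avoiding if and only if $\Phi_4(\pi)$ is a parallelogram polyomino.
   Context: Cells are unit squares $[i,i+1]\times[j,j+1]$ with integer $i,j$; a polyomino is a finite edge-connected set of cells, up to translation. A directed polyomino has a distinguished cell (the source) such that every cell can be reached from the source by a path of cells moving only North or East inside the polyomino. It is column-convex if each column is connected. The (directed) height is the number of distinct diagonal lines $x+y=\text{const}$ passing through centers of its cells. A deco polyomino is a directed column-convex polyomino whose height is attained only in its last (rightmost) column; $D_n$ denotes those of height $n$. Every deco polyomino of height $n$ is built uniquely by $n$ steps from the empty polyomino; at step $j$ one performs either an elevation (add a cell at the bottom of the leftmost column; step 1 is always an elevation) or a column pasting (add a new column of $k$ cells, $1\le k\le j-1$, to the left of the current polyomino so that the bottoms of the first two columns lie at the same level). The bijection $\Phi_4:S_n\to D_n$ is defined through its inverse, recursively: the height-1 polyomino maps to the permutation $1$; if $\delta\in D_n$ arises from $\delta'\in D_{n-1}$ and $\Phi_4^{-1}(\delta')=\pi_1\cdots\pi_{n-1}$, then $\Phi_4^{-1}(\delta)=\pi_1\cdots\pi_{n-1}\,n$ if the last step is an elevation, and $\Phi_4^{-1}(\delta)=\pi_1\cdots\pi_{n-1-k}\,n\,\pi_{n-k}\cdots\pi_{n-1}$ if the last step pastes a column of length $k$. A permutation is $321$-avoiding if there are no indices $i<j<k$ with $\pi_i>\pi_j>\pi_k$. A parallelogram polyomino is a polyomino bounded by two lattice paths with steps $(1,0)$ and $(0,1)$ which intersect only at their common origin and common endpoint.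 *)

(* Defs.v *)
From mathcomp Require Import all_boot all_order all_algebra.
Set Implicit Arguments. Unset Strict Implicit. Unset Printing Implicit Defensive.
Import Order.TTheory GRing.Theory Num.Theory.

(* A cell [i,i+1]x[j,j+1] is represented by its lower-left corner (i,j). *)
Definition cell := (int * int)%type.

(* A deco polyomino is stored as its list of columns, leftmost first; column
   number x (0-based in the list) occupies the cells (x, y) with
   bottom <= y < bottom + length.  Polyominoes are considered up to
   translation; all predicates below are translation invariant. *)
Definition column := (int * nat)%type.

Definition elevation (cs : seq column) : seq column :=
  match cs with
  | [::] => [:: (0%R, 1%N)]
  | (b, l) :: cs' => (b - 1, l.+1)%R :: cs'
  end.

Definition pasting (k : nat) (cs : seq column) : seq column :=
  match cs with
  | [::] => [:: (0%R, k)]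
  | (b, l) :: _ => (b, k) :: cs
  end.

(* A construction code: entry number j (0-based, i.e. step j+1) is 0 for an
   elevation and k >= 1 for the pasting of a column of k cells. *)
Definition step (k : nat) (cs : seq column) : seq column :=
  if k == 0%N then elevation cs else pasting k cs.

Definition build (c : seq nat) : seq column := foldl (fun cs k => step k cs) [::] c.

(* Validity: step 1 is an elevation and at step j one has 1 <= k <= j-1. *)
Definition valid_code (c : seq nat) : bool :=
  all (fun j => nth 0%N c j <= j) (iota 0 (size c)).

Definition deco_cells (cs : seq column) (p : cell) : Prop :=
  (0 <= p.1)%R /\
  let: (b, l) := nth (0%R, 0%N) cs `|p.1|%N in (b <= p.2 < b + l%:Z)%R.

(* Phi_4^{-1}: permutations in one-line notation as sequences of values. *)
Definition insert_step (k : nat) (n : nat) (pi : seq nat) : seq nat :=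
  if k == 0%N then rcons pi n
  else take (size pi - k) pi ++ n :: drop (size pi - k) pi.

Fixpoint Phi4inv_aux (pi : seq nat) (j : nat) (c : seq nat) : seq nat :=
  match c with
  | [::] => pi
  | k :: c' => Phi4inv_aux (insert_step k j pi) j.+1 c'
  end.

Definition Phi4inv (c : seq nat) : seq nat := Phi4inv_aux [::] 1 c.

Definition Phi4 (n : nat) (pi : seq nat) : seq column :=
  match [pick c : n.-tuple 'I_n | valid_code (map val c) && (Phi4inv (map val c) == pi)] with
  | Some c => build (map val c)
  | None => [::]
  end.

Definition avoids321 (pi : seq nat) : Prop :=
  ~ exists i j k, [/\ (i < j < k)%N, (k < size pi)%N &
                     (nth 0 pi k < nth 0 pi j < nth 0 pi i)%N].

Definition is_perm (n : nat) (pi : seq nat) : bool := perm_eq pi (iota 1 n).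

(* lattice paths: true = East step (1,0), false = North step (0,1) *)
Definition lstep (o : cell) (b : bool) : cell :=
  if b then (o.1 + 1, o.2)%R else (o.1, o.2 + 1)%R.

Fixpoint pverts (o : cell) (p : seq bool) : seq cell :=
  o :: match p with [::] => [::] | b :: p' => pverts (lstep o b) p' end.

Definition pend (o : cell) (p : seq bool) : cell := last o (pverts o p).

(* height of the East step of the path crossing the vertical strip [i,i+1] *)
Fixpoint eheight (o : cell) (p : seq bool) (i : int) : option int :=
  match p with
  | [::] => None
  | b :: p' => if b && (o.1 == i) then Some o.2 else eheight (lstep o b) p' i
  end.

Definition between (o : cell) (U L : seq bool) (p : cell) : Prop :=
  exists hU hL, [/\ eheight o U p.1 = Some hU, eheight o L p.1 = Some hL &
                   (Num.min hU hL <= p.2 < Num.max hU hL)%R].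

Definition parallelogram (P : cell -> Prop) : Prop :=
  exists (o : cell) (U L : seq bool),
    [/\ pend o U = pend o L,
        (forall v, v \in pverts o U -> v \in pverts o L -> v = o \/ v = pend o U) &
        (forall p, P p <-> between o U L p)].

(* Main.v *)
Require Import Defs.
From mathcomp Require Import all_boot all_order all_algebra zify.
Import Order.TTheory GRing.Theory Num.Theory.

Lemma insert_stepE k n pi :
  insert_step k n pi = take (size pi - k) pi ++ n :: drop (size pi - k) pi.
Proof.
rewrite /insert_step; case: eqP => [->|//].
by rewrite subn0 take_size drop_size cats1.
Qed.

Lemma Phi4inv_aux_rcons pi j c k :
  Phi4inv_aux pi j (rcons c k) = insert_step k (j + size c) (Phi4inv_aux pi j c).
Proof.
elim: c pi j => [|a c IH] pi j /=; first by rewrite addn0.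
by rewrite IH addSnnS.
Qed.

Lemma Phi4inv_rcons c k :
  Phi4inv (rcons c k) = insert_step k (size c).+1 (Phi4inv c).
Proof. by rewrite /Phi4inv Phi4inv_aux_rcons. Qed.

Lemma size_insert_step k n pi : size (insert_step k n pi) = (size pi).+1.
Proof.
rewrite insert_stepE size_cat /= size_take size_drop.
case: ltnP => h; lia.
Qed.

Lemma Phi4inv_props c :
  size (Phi4inv c) = size c /\ (forall x, x \in Phi4inv c -> x <= size c).
Proof.
elim/last_ind: c => [|c k [IH1 IH2]]; first by [].
rewrite Phi4inv_rcons size_insert_step IH1 size_rcons; split=> // x.
rewrite insert_stepE mem_cat inE => /orP[/mem_take|/orP[/eqP->//|/mem_drop]] /IH2; lia.
Qed.

Lemma valid_rcons c k : valid_code (rcons c k) = valid_code c && (k <= size c).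
Proof.
rewrite /valid_code size_rcons -addn1 iotaD add0n all_cat /= andbT.
rewrite nth_rcons ltnn eqxx; congr andb.
apply: eq_in_all => j; rewrite mem_iota => /andP[_ hj].
by rewrite nth_rcons add0n in hj *; rewrite hj.
Qed.
Definition ins p (x : nat) pi := take p pi ++ x :: drop p pi.

Lemma nth_ins p x (pi : seq nat) i : p <= size pi ->
  nth 0 (ins p x pi) i =
  if i < p then nth 0 pi i else if i == p then x else nth 0 pi i.-1.
Proof.
move=> hp; rewrite /ins nth_cat size_take.
have -> : (if p < size pi then p else size pi) = p by case: ltnP => //; lia.
case: ltnP => hi; first by rewrite nth_take.
case: eqP => [->|hne]; first by rewrite subnn.
have -> : i - p = (i.-1 - p).+1 by lia.
by rewrite /= nth_drop; congr nth; lia.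
Qed.

Lemma size_ins p x (pi : seq nat) : p <= size pi -> size (ins p x pi) = (size pi).+1.
Proof. move=> hp; rewrite /ins size_cat /= size_take size_drop; case: ltnP; lia. Qed.

Lemma avoid_ins p x (pi : seq nat) : p <= size pi -> (forall y, y \in pi -> y < x) ->
  avoids321 pi -> sorted leq (drop p pi) -> avoids321 (ins p x pi).
Proof.
move=> hp hx hav hs [i [j [k [hijk hk hv]]]].
rewrite size_ins // in hk.
rewrite !nth_ins // in hv.
have mem : forall m, m < size pi -> nth 0 pi m < x.
  by move=> m hm; apply: hx; apply: mem_nth.
move: hijk hv => /andP [hij hjk].
case: (ltnP i p) => hip.
- case: (ltnP j p) => hjp.
  + case: (ltnP k p) => hkp.
    * move=> hv; apply: hav; exists i, j, k; split; [apply/andP; split; lia|lia|exact hv].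
    * case: (eqVneq k p) => hkp'.
      - move=> /andP[h1 h2]; have := mem i; lia.
      - move=> hv; apply: hav; exists i, j, k.-1; split; [apply/andP; split; lia|lia|exact hv].
  + have -> : k < p = false by lia.
    case: (eqVneq j p) => hjp'.
    * have -> : k == p = false by apply/eqP; lia.
      move=> /andP[h1 h2]; have := mem i; lia.
    * have -> : k == p = false by apply/eqP; lia.
      move=> hv; apply: hav; exists i, j.-1, k.-1; split; [apply/andP; split; lia|lia|exact hv].
- have -> : j < p = false by lia.
  have -> : k < p = false by lia.
  have -> : j == p = false by apply/eqP; lia.
  have -> : k == p = false by apply/eqP; lia.
  case: (eqVneq i p) => hip'.
  + move=> /andP[h1 _].
    have hsz : size (drop p pi) = size pi - p by rewrite size_drop.
    have := sorted_leq_nth leq_trans leqnn 0 hs (j.-1 - p) (k.-1 - p).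
    rewrite !inE !hsz !nth_drop.
    have -> : p + (j.-1 - p) = j.-1 by lia.
    have -> : p + (k.-1 - p) = k.-1 by lia.
    move=> H; have := H ltac:(lia) ltac:(lia) ltac:(lia); lia.
  + move=> hv; apply: hav; exists i.-1, j.-1, k.-1; split; [apply/andP; split; lia|lia|exact hv].
Qed.

Lemma keep321_ins p x (pi : seq nat) : p <= size pi -> ~ avoids321 pi -> ~ avoids321 (ins p x pi).
Proof.
move=> hp hn hav; apply: hn => -[i [j [k [/andP[hij hjk] hk hv]]]].
pose f m := if m < p then m else m.+1.
apply: hav; exists (f i), (f j), (f k); split.
- rewrite /f; apply/andP; split; [case: (ltnP i p); case: (ltnP j p)|case: (ltnP k p); case: (ltnP j p)]; lia.
- rewrite size_ins // /f; case: (ltnP k p); lia.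
- have E : forall m, nth 0 (ins p x pi) (f m) = nth 0 pi m.
    move=> m; rewrite /f; case: (ltnP m p) => h; rewrite nth_ins // ?h //.
    have -> : (m.+1 < p) = false by lia.
    by have -> : (m.+1 == p) = false by apply/eqP; lia.
  by rewrite !E.
Qed.

Lemma bad_ins p x (pi : seq nat) a : p <= a -> a.+1 < size pi ->
  nth 0 pi a.+1 < nth 0 pi a -> nth 0 pi a < x -> ~ avoids321 (ins p x pi).
Proof.
move=> hpa ha h1 h2; apply; exists p, a.+1, a.+2; split.
- apply/andP; split; lia.
- rewrite size_ins; lia.
- rewrite !nth_ins; try lia.
  rewrite ltnn eqxx.
  have -> : (a.+1 < p) = false by lia.
  have -> : (a.+2 < p) = false by lia.
  have -> : (a.+1 == p) = false by apply/eqP; lia.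
  have -> : (a.+2 == p) = false by apply/eqP; lia.
  by rewrite /= h1 h2.
Qed.

Lemma sorted_rcons_le (l : seq nat) x : sorted leq l -> (forall y, y \in l -> y <= x) ->
  sorted leq (rcons l x).
Proof.
case: l => [//|a l] /= hs hx; rewrite rcons_path hs /=.
by apply: hx; apply: mem_last.
Qed.

Lemma drop_ins p x (pi : seq nat) : p <= size pi -> drop p.+1 (ins p x pi) = drop p pi.
Proof.
move=> hp; rewrite /ins drop_cat size_take.
have -> : (if p < size pi then p else size pi) = p by case: ltnP => //; lia.
have -> : (p.+1 < p) = false by lia.
have E : p.+1 - p = 1 by lia.
by rewrite E /= drop0.
Qed.

Definition Lcol (cs : seq column) : nat := (head (0%R, 0%N) cs).2.

Fixpoint goodaux (cs : seq column) (c : seq nat) : bool :=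
  match c with
  | [::] => true
  | k :: c' => (k <= Lcol cs) && goodaux (step k cs) c'
  end.

Definition good c := goodaux [::] c.

Lemma good_rcons c k : good (rcons c k) = good c && (k <= Lcol (build c)).
Proof.
rewrite /good /build; elim: c [::] => [|a c IH] cs /=; first by rewrite andbT.
by rewrite IH andbA.
Qed.

Lemma build_rcons c k : build (rcons c k) = step k (build c).
Proof. by rewrite /build foldl_rcons. Qed.

Lemma step_nil k cs : step k cs != [::].
Proof. by rewrite /step /elevation /pasting; case: (k == 0); case: cs => [|[b l] cs]. Qed.

Lemma build_nil c : c != [::] -> build c != [::].
Proof. by case/lastP: c => // c k _; rewrite build_rcons step_nil. Qed.

Lemma Lcol_step k cs : cs != [::] ->
  Lcol (step k cs) = if k == 0 then (Lcol cs).+1 else k.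
Proof. by case: cs => [//|[b l] cs] _; rewrite /step; case: eqP. Qed.

Definition Iinv (pi : seq nat) (L : nat) :=
  [/\ 0 < L, L <= size pi, sorted leq (drop (size pi - L) pi) &
      (L < size pi -> nth 0 pi (size pi - L) < nth 0 pi (size pi - L).-1)].

Lemma perm_side c : valid_code c -> c != [::] ->
  (good c -> Iinv (Phi4inv c) (Lcol (build c)) /\ avoids321 (Phi4inv c)) /\
  (~~ good c -> ~ avoids321 (Phi4inv c)).
Proof.
elim/last_ind: c => [//|c k IH]; rewrite valid_rcons => /andP[hv hk] _.
case: (eqVneq c [::]) => [hc0|hc].
  subst c; have -> : k = 0 by move: hk; rewrite /=; lia.
  rewrite /good /build /Phi4inv /= /insert_step /=.
  split=> // _; split; first by rewrite /Iinv /=.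
  move=> [i [j [l [/andP[h1 h2] h3 _]]]]; move: h3; rewrite /=; lia.
have [IH1 IH2] := IH hv hc.
have [hsz hbd] := Phi4inv_props c.
set pi := Phi4inv c in IH1 IH2 hsz hbd *.
set L := Lcol (build c) in IH1 IH2 *.
set s := size c in hsz hbd hk *.
have hins : Phi4inv (rcons c k) = ins (s - k) s.+1 pi.
  by rewrite Phi4inv_rcons insert_stepE hsz.
rewrite hins good_rcons build_rcons Lcol_step ?build_nil //.
have hp : s - k <= size pi by lia.
have hlt : forall y, y \in pi -> y < s.+1 by move=> y /hbd; lia.
have hnth : forall m, m < s -> nth 0 pi m < s.+1.
  by move=> m hm; apply: hlt; apply: mem_nth; rewrite hsz.
case hg: (good c) => /=; last first.
  split => // _; apply: keep321_ins => //; apply: IH2; by rewrite hg.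
have [[hL0 hL hs hd] hav] := IH1 hg.
change (Lcol (build c)) with L.
rewrite hsz in hL hs hd.
case: (leqP k L) => hkL; last first.
  split => // _.
  apply: (@bad_ins (s - k) s.+1 pi (s - L - 1)); [lia|rewrite hsz; lia| |apply: hnth; lia].
  have -> : (s - L - 1).+1 = s - L by lia.
  have -> : s - L - 1 = (s - L).-1 by lia.
  apply: hd; lia.
split => // _.
have hsk : sorted leq (drop (s - k) pi).
  have -> : s - k = (L - k) + (s - L) by lia.
  by rewrite -drop_drop; apply: drop_sorted.
split; last by apply: avoid_ins.
rewrite /Iinv size_ins // hsz.
case: eqP => [hk0|hk0].
- subst k; rewrite subn0 in hsk *.
  have hI : ins s s.+1 pi = rcons pi s.+1.
    by rewrite /ins -hsz take_size drop_size cats1.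
  rewrite hI subSS; split; [lia|lia| | ].
  + rewrite -cats1 drop_cat hsz.
    case: ltnP => h.
    * rewrite cats1; apply: sorted_rcons_le => // y /mem_drop /hbd; lia.
    * lia.
  + move=> h; rewrite -cats1 !nth_cat hsz.
    have -> : s - L < s by lia.
    have -> : (s - L).-1 < s by lia.
    apply: hd; lia.
- split; [lia|lia| | ].
  + have -> : s.+1 - k = (s - k).+1 by lia.
    by rewrite drop_ins.
  + move=> _; have -> : s.+1 - k = (s - k).+1 by lia.
    rewrite /= !nth_ins //.
    rewrite ltnn eqxx.
    have -> : ((s - k).+1 < s - k) = false by lia.
    have -> : ((s - k).+1 == s - k) = false by apply/eqP; lia.
    by apply: hnth; lia.
Qed.

Local Open Scope ring_scope.

Lemma pend_cons o b p : pend o (b :: p) = pend (lstep o b) p.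
Proof. by rewrite /pend /=; case: p. Qed.

Lemma pend_nil o : pend o [::] = o.
Proof. by []. Qed.

Lemma pend_cat o p q : pend o (p ++ q) = pend (pend o p) q.
Proof. by elim: p o => [|b p IH] o //=; rewrite !pend_cons IH. Qed.

Lemma pend_nseq o d : pend o (nseq d false) = (o.1, o.2 + d%:Z).
Proof.
elim: d o => [|d IH] [x y] /=; first by rewrite addr0.
rewrite pend_cons IH /=; congr pair; lia.
Qed.

Lemma mem_pverts_cat v o p q : v \in pverts o (p ++ q) ->
  v \in pverts o p \/ v \in pverts (pend o p) q.
Proof.
elim: p o => [|b p IH] o /=; first by right.
rewrite inE => /orP[/eqP->|/IH[h|h]]; first by left; rewrite inE eqxx.
- by left; rewrite inE h orbT.
- by right; rewrite pend_cons.
Qed.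

Lemma mem_pverts_nseq v o d : v \in pverts o (nseq d false) ->
  v.1 = o.1 /\ o.2 <= v.2 <= o.2 + d%:Z.
Proof.
elim: d o => [|d IH] [x y] /=.
  by rewrite inE => /eqP -> /=; split => //; lia.
rewrite inE => /orP[/eqP->|h] /=; first by split => //; lia.
have [h1 h2] := IH _ h; move: h1 h2 => /= h1 h2; split => //; lia.
Qed.

Lemma pverts_ge v o p : v \in pverts o p -> o.1 <= v.1 /\ o.2 <= v.2.
Proof.
elim: p o => [|b p IH] [x y] /=.
  by rewrite inE => /eqP -> /=; lia.
rewrite inE => /orP[/eqP->|h] /=; first lia.
have := IH _ h; move: h; case: b => /= _; lia.
Qed.

Lemma eheight_cat o p q i : eheight o (p ++ q) i =
  if eheight o p i is Some h then Some h else eheight (pend o p) q i.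
Proof.
elim: p o => [|b p IH] o //=.
by case: ifP => _ //; rewrite IH pend_cons.
Qed.

Lemma eheight_nseq o d i : eheight o (nseq d false) i = None.
Proof. by elim: d o => [|d IH] o //=. Qed.

Lemma eheight_ge o p i h : eheight o p i = Some h -> o.1 <= i /\ o.2 <= h.
Proof.
elim: p o => [|b p IH] [x y] //=.
case: b => /=.
- case: eqP => [-> [hh]|_ /IH /=]; lia.
- move=> /IH /=; lia.
Qed.

Lemma mem_pend o p : pend o p \in pverts o p.
Proof. by rewrite /pend; case: p => [|b p] /=; [rewrite inE | exact: mem_last]. Qed.

Lemma eheight_lt_end o p i h : eheight o p i = Some h -> i < (pend o p).1.
Proof.
elim: p o => [|b p IH] [x y] //=.
rewrite pend_cons; case: b => /=.
- case: eqP => [hx _|_ /IH //].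
  have := @pverts_ge (pend (x + 1, y) p) (x + 1, y) p.
  rewrite mem_pend => /(_ erefl) /=; lia.
- by move=> /IH.
Qed.

Lemma eheight_mono o p i i' h h' : i < i' ->
  eheight o p i = Some h -> eheight o p i' = Some h' -> h <= h'.
Proof.
elim: p o => [|b p IH] [x y] //=.
case: b => /=.
- case: eqP => [hx hlt [hh]|hne hlt].
  + have -> : (x == i') = false by apply/eqP; lia.
    by move=> /eheight_ge /=; lia.
  + case: eqP => [hx' h1 [hh]|_]; last by apply: IH.
    move: h1 => /eheight_ge /=; lia.
- by apply: IH.
Qed.
Definition top (c : column) : int := c.1 + (c.2)%:Z.
Definition Rwf (c1 c2 : column) : bool := (c1.1 <= c2.1) && (c2.1 < top c1).
Definition Rtop (c1 c2 : column) : bool := top c1 <= top c2.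

Fixpoint Lp (cs : seq column) : seq bool :=
  match cs with
  | [::] => [::]
  | c :: cs' => true :: (nseq (match cs' with [::] => c.2 | c' :: _ => `|c'.1 - c.1|%N end) false
                          ++ Lp cs')
  end.

Fixpoint Up (s : int) (cs : seq column) : seq bool :=
  match cs with
  | [::] => [::]
  | c :: cs' => nseq `|top c - s|%N false ++ true :: Up (top c) cs'
  end.

Lemma Lp_pend x0 c cs : sorted Rwf (c :: cs) ->
  pend (x0, c.1) (Lp (c :: cs)) = (x0 + ((size cs).+1)%:Z, top (last c cs)).
Proof.
elim: cs x0 c => [|c' cs IH] x0 c /=.
  move=> _; rewrite pend_cons cats0 pend_nseq /= /top; congr pair; lia.
move=> /andP[/andP[h1 h2] hp].
rewrite pend_cons pend_cat pend_nseq /=.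
have -> : c.1 + (`|c'.1 - c.1|%N)%:Z = c'.1 by lia.
rewrite IH //; congr pair; lia.
Qed.

Lemma Lp_eh x0 c cs i : sorted Rwf (c :: cs) -> (i <= size cs)%N ->
  eheight (x0, c.1) (Lp (c :: cs)) (x0 + i%:Z) = Some (nth c (c :: cs) i).1.
Proof.
elim: cs x0 c i => [|c' cs IH] x0 c i /=.
  by move=> _; rewrite leqn0 => /eqP -> /=; rewrite addr0 eqxx.
move=> /andP[/andP[h1 h2] hp] hi.
case: i hi => [|i] hi /=; first by rewrite addr0 eqxx.
have -> : (x0 == x0 + (i.+1)%:Z) = false by apply/eqP; lia.
rewrite eheight_cat eheight_nseq pend_nseq /=.
have -> : c.1 + (`|c'.1 - c.1|%N)%:Z = c'.1 by lia.
have -> : x0 + (i.+1)%:Z = (x0 + 1) + i%:Z by lia.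
by have := IH (x0 + 1) c' i hp hi; rewrite /= => ->; rewrite (set_nth_default c).
Qed.

Lemma Up_pend x0 s c cs : sorted Rtop (c :: cs) -> s <= top c ->
  pend (x0, s) (Up s (c :: cs)) = (x0 + ((size cs).+1)%:Z, top (last c cs)).
Proof.
elim: cs x0 s c => [|c' cs IH] x0 s c /=.
  move=> _ hs; rewrite pend_cat pend_nseq pend_cons /=; congr pair; lia.
move=> /andP[h1 hp] hs.
rewrite pend_cat pend_nseq pend_cons /=.
have -> : s + (`|top c - s|%N)%:Z = top c by lia.
rewrite IH //; congr pair; lia.
Qed.

Lemma Up_eh x0 s c cs i : sorted Rtop (c :: cs) -> s <= top c -> (i <= size cs)%N ->
  eheight (x0, s) (Up s (c :: cs)) (x0 + i%:Z) = Some (top (nth c (c :: cs) i)).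
Proof.
elim: cs x0 s c i => [|c' cs IH] x0 s c i /=.
  move=> _ hs hi; have -> : i = 0%N by lia.
  rewrite eheight_cat eheight_nseq pend_nseq /= addr0 eqxx; congr Some; lia.
move=> /andP[h1 hp] hs hi.
rewrite eheight_cat eheight_nseq pend_nseq /=.
have -> : s + (`|top c - s|%N)%:Z = top c by lia.
case: i hi => [|i] hi /=; first by rewrite addr0 eqxx.
have -> : (x0 == x0 + (i.+1)%:Z) = false by apply/eqP; lia.
have -> : x0 + (i.+1)%:Z = (x0 + 1) + i%:Z by lia.
by have := IH (x0 + 1) (top c) c' i hp h1 hi; rewrite /= => ->; rewrite (set_nth_default c).
Qed.

Lemma pverts_cons o b p : pverts o (b :: p) = o :: pverts (lstep o b) p.
Proof. by []. Qed.

Lemma Lp_cons1 c : Lp [:: c] = true :: nseq c.2 false.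
Proof. by rewrite /= cats0. Qed.

Lemma Lp_cons2 c c' cs : Lp (c :: c' :: cs) = true :: (nseq `|c'.1 - c.1|%N false ++ Lp (c' :: cs)).
Proof. by []. Qed.

Lemma Up_cons s c cs : Up s (c :: cs) = nseq `|top c - s|%N false ++ true :: Up (top c) cs.
Proof. by []. Qed.

Lemma lstepT a b : lstep (a, b) true = (a + 1, b).
Proof. by []. Qed.

Lemma inter x0 s c cs v : sorted Rwf (c :: cs) -> sorted Rtop (c :: cs) ->
  all (fun c : column => (0 < c.2)%N) (c :: cs) -> c.1 <= s <= top c ->
  v \in pverts (x0, c.1) (Lp (c :: cs)) -> v \in pverts (x0, s) (Up s (c :: cs)) ->
  v = (x0 + ((size cs).+1)%:Z, top (last c cs)) \/ (s = c.1 /\ v = (x0, c.1)).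
Proof.
case: v => vx vy.
elim: cs x0 s c => [|c' cs IH] x0 s c.
  move=> _ _ /andP[hpos _] hs.
  rewrite Lp_cons1 Up_cons pverts_cons inE => /orP[/eqP [-> ->]|].
    move=> /mem_pverts_cat [/mem_pverts_nseq /= [_ h2]|]; first by right; split => //; lia.
    rewrite pend_nseq pverts_cons inE /= => /orP[/eqP [h]|]; first by move: h hs hpos; rewrite /top; lia.
    rewrite mem_seq1 => /eqP [h _]; lia.
  move=> /mem_pverts_nseq /= [-> h2].
  move=> /mem_pverts_cat [/mem_pverts_nseq /= [h1 _]|]; first lia.
  rewrite pend_nseq pverts_cons inE /= => /orP[/eqP [h1 _]|]; first lia.
  rewrite mem_seq1 => /eqP [h3].
  left; congr pair; move: h2 h3 hs; rewrite /top; lia.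
move=> /andP[/andP[hw1 hw2] hw] /andP[ht1 ht] /andP[hpos hposs] hs.
rewrite Lp_cons2 pverts_cons inE => /orP[/eqP [-> ->]|].
  move=> /mem_pverts_cat [/mem_pverts_nseq /= [_ h2]|]; first by right; split => //; lia.
  rewrite pend_nseq pverts_cons inE /= => /orP[/eqP [h]|/pverts_ge /=]; [move: h hs hpos; rewrite /top; lia|lia].
move=> /mem_pverts_cat [/mem_pverts_nseq /= [-> h2]|].
  move=> /mem_pverts_cat [/mem_pverts_nseq /= [h1 _]|]; first lia.
  rewrite pend_nseq pverts_cons inE /= => /orP[/eqP [h1 _]|/pverts_ge /= [_ h3]]; first lia.
  rewrite /Rtop /top in ht1 h2 h3 hw2 *; lia.
move=> hL.
rewrite (_ : pend _ (nseq _ false) = (x0 + 1, c'.1)) in hL; last first.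
  by rewrite pend_nseq /=; congr pair; lia.
move=> /mem_pverts_cat [/mem_pverts_nseq [h1 _]|].
  rewrite /= in h1; have := @pverts_ge _ _ _ hL => /=; lia.
rewrite (_ : pend _ (nseq _ false) = (x0, top c)); last first.
  by rewrite pend_nseq /=; congr pair; lia.
rewrite pverts_cons inE => /orP[/eqP [h1 _]|].
  have := @pverts_ge _ _ _ hL => /=; lia.
rewrite lstepT => hU.
have hb : c'.1 <= top c <= top c' by apply/andP; split; [lia| rewrite /Rtop in ht1].
case: (IH (x0 + 1) (top c) c' hw ht hposs hb hL hU).
- move=> ->; left; rewrite /=; congr pair; lia.
- move=> [h _]; lia.
Qed.

Definition wf (cs : seq column) :=
  [&& cs != [::], all (fun c : column => (0 < c.2)%N) cs & sorted Rwf cs].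

Lemma deco_pos cs (i : nat) y :
  deco_cells cs (i%:Z, y) <->
  let: (b, l) := nth (0, 0%N) cs i in b <= y < b + l%:Z.
Proof. by rewrite /deco_cells /=; split => [[]|]. Qed.

Lemma geo_to cs : wf cs -> sorted Rtop cs -> parallelogram (deco_cells cs).
Proof.
case: cs => [//|c cs] /andP[_ /andP[hall hw]] ht.
have hs : c.1 <= c.1 <= top c.
  by apply/andP; split => //; move: hall => /andP[h _]; rewrite /top; lia.
exists (0, c.1), (Up c.1 (c :: cs)), (Lp (c :: cs)); split.
- by rewrite Up_pend ?Lp_pend //; move: hs => /andP[].
- move=> v hU hL.
  case: (@inter 0 c.1 c cs v hw ht hall hs hL hU) => [->|[_ ->]]; last by left.
  by right; rewrite Up_pend //; move: hs => /andP[].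
- move=> [x y]; split.
  + rewrite /deco_cells /= => -[hx].
    case: (ltnP `|x|%N (size cs).+1) => hi; last first.
      by rewrite nth_default //; lia.
    have -> : x = 0 + (`|x|%N)%:Z by lia.
    rewrite (set_nth_default c) // => hy.
    have hpos : (0 < (nth c (c :: cs) `|x|).2)%N.
      by apply: (allP hall); apply: mem_nth.
    exists (top (nth c (c :: cs) `|x|)), (nth c (c :: cs) `|x|).1; split.
    * by rewrite Up_eh //; move: hs => /andP[].
    * by rewrite Lp_eh.
    * move: hy hpos; case: (nth c (c :: cs) `|x|) => b l /=; rewrite /top /=.
      move=> /andP[h1 h2] h3; lia.
  + move=> [hU [hL [eU0 eL0 hy0]]].
    have eU : eheight (0, c.1) (Up c.1 (c :: cs)) x = Some hU := eU0.
    have eL : eheight (0, c.1) (Lp (c :: cs)) x = Some hL := eL0.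
    have hy : Num.min hU hL <= y < Num.max hU hL := hy0.
    clear eU0 eL0 hy0.
    have [hx0 _] := @eheight_ge _ _ _ _ eL; move: hx0 => /= hx0.
    have := @eheight_lt_end _ _ _ _ eL; rewrite Lp_pend //= => hx1.
    have hxe : x = 0 + (`|x|%N)%:Z by lia.
    have hi : (`|x|%N <= size cs)%N by lia.
    rewrite hxe Lp_eh // in eL; rewrite hxe Up_eh // in eU; last by move: hs => /andP[].
    case: eU => eU; case: eL => eL; rewrite -eU -eL in hy.
    rewrite /deco_cells /=; split; first by lia.
    rewrite (set_nth_default c) //.
    have hpos : (0 < (nth c (c :: cs) `|x|).2)%N.
      by apply: (allP hall); apply: mem_nth.
    move: hy hpos; case: (nth c (c :: cs) `|x|) => b l /=; rewrite /top /=.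
    lia.
Qed.

Lemma geo_from cs : wf cs -> parallelogram (deco_cells cs) -> sorted Rtop cs.
Proof.
move=> /andP[_ /andP[hall _]] [o [U [L [_ _ hP]]]].
have col : forall i : nat, (i < size cs)%N -> exists hU hL,
    [/\ eheight o U i%:Z = Some hU, eheight o L i%:Z = Some hL &
        top (nth ((0:int)%R, 0%N) cs i) = Num.max hU hL].
  move=> i hi.
  have hpos : (0 < (nth ((0:int)%R, 0%N) cs i).2)%N by apply: (allP hall); apply: mem_nth.
  case E: (nth ((0:int)%R, 0%N) cs i) hpos => [b l] /= hpos.
  have [hU [hL [eU eL hy]]] : between o U L (i%:Z, b + l%:Z - 1).
    by apply/hP/deco_pos; rewrite E; lia.
  exists hU, hL; split => //.
  move: hy => /= hy.
  have : between o U L (i%:Z, Num.max hU hL - 1) by exists hU, hL; split => //=; lia.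
  move=> /hP /deco_pos; rewrite E /top /=; lia.
apply/(sortedP ((0:int)%R, 0%N)) => i hi.
have [hU [hL [eU eL t1]]] := col i (ltnW hi).
have [hU' [hL' [eU' eL' t2]]] := col i.+1 hi.
rewrite /Rtop t1 t2.
have ltii : (i%:Z < (i.+1)%:Z)%R by lia.
have := @eheight_mono _ _ _ _ _ _ ltii eU eU'.
have := @eheight_mono _ _ _ _ _ _ ltii eL eL'.
lia.
Qed.

Lemma build_side c : valid_code c -> c != [::] ->
  wf (build c) /\ good c = sorted Rtop (build c).
Proof.
elim/last_ind: c => [//|c k IH]; rewrite valid_rcons => /andP[hv hk] _.
rewrite build_rcons good_rcons.
case: (eqVneq c [::]) => [hc0|hc].
  subst c; have -> : k = 0%N by move: hk; rewrite /=; lia.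
  by [].
have [hwf hg] := IH hv hc.
rewrite hg; move: hwf.
case: (build c) => [//|[b l] cs] /andP[_ /andP[/andP[hl hall] hw]].
rewrite /step /Lcol /=; case: (eqVneq k 0%N) => [->|hk0].
- rewrite /elevation; have et : top (b - 1, l.+1) = top (b, l) by rewrite /top /=; lia.
  rewrite andbT; split.
  + rewrite /wf /=; apply/andP; split; first exact: hall.
    case: cs hw {hall} => [//|c' cs] /= /andP[h1 ->]; rewrite andbT /Rwf et.
    move: h1 => /andP[/= h1 h2]; apply/andP; split => /=; lia.
  + by case: cs hw {hall} => [//|c' cs] /= _; rewrite /Rtop et.
- rewrite /pasting /=; split.
  + rewrite /wf /=; apply/and3P; split.
    * by apply/and3P; split => //; lia.
    * rewrite /Rwf /top /= lexx /=; lia.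
    * exact: hw.
  + have -> : Rtop (b, k) (b, l) = (k <= l)%N by rewrite /Rtop /top /=; apply/idP/idP; lia.
    by rewrite andbC.
Qed.

Local Close Scope ring_scope.

Lemma exists_code n pi : is_perm n pi ->
  exists c, [/\ size c = n, valid_code c & Phi4inv c = pi].
Proof.
elim: n pi => [|n IH] pi.
  rewrite /is_perm /= => hp; exists [::]; split => //.
  by have := perm_size hp; case: pi {hp}.
rewrite /is_perm => hp.
have hx : n.+1 \in pi by rewrite (perm_mem hp) mem_iota; lia.
set p := index n.+1 pi.
have hpsz : p < size pi by rewrite index_mem.
have hsz : size pi = n.+1 by rewrite (perm_size hp) size_iota.
have hdec : pi = take p pi ++ n.+1 :: drop p.+1 pi.
  by rewrite -{1}(cat_take_drop p pi) (drop_nth 0 hpsz) nth_index.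
set pi0 := take p pi ++ drop p.+1 pi.
have hp0 : is_perm n pi0.
  rewrite /is_perm -(perm_cons n.+1).
  have e1 : perm_eq (n.+1 :: pi0) pi.
    have e0 : perm_eq (take p pi ++ [:: n.+1] ++ drop p.+1 pi)
                      ([:: n.+1] ++ take p pi ++ drop p.+1 pi).
      by apply/permPl; exact: perm_catCA.
    by rewrite {1}hdec /pi0 perm_sym; exact: e0.
  apply: (perm_trans (perm_trans e1 hp)).
  have E : iota 1 n.+1 = iota 1 n ++ [:: n.+1] by rewrite -[n.+1]addn1 iotaD /= add1n addn1.
  by rewrite E perm_catC.
have [c0 [hs0 hv0 hi0]] := IH _ hp0.
have hsz0 : size pi0 = n by rewrite /pi0 size_cat size_take size_drop hpsz; lia.
exists (rcons c0 (n - p)); split.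
- by rewrite size_rcons hs0.
- by rewrite valid_rcons hv0 hs0 leq_subr.
- rewrite Phi4inv_rcons insert_stepE hi0 hsz0 hs0.
  have -> : n - (n - p) = p by lia.
  rewrite {1}hdec /pi0; congr (_ ++ _ :: _).
  + by rewrite take_cat size_take hpsz ltnn subnn take0 cats0.
  + rewrite drop_cat size_take hpsz ltnn subnn drop0; done.
Qed.

Lemma valid_bound c x : valid_code c -> x \in c -> x < size c.
Proof.
move=> /allP hv hx.
have hi : index x c < size c by rewrite index_mem.
have := hv (index x c); rewrite mem_iota add0n hi nth_index // => /(_ erefl); lia.
Qed.

Theorem mainTheorem3 (n : nat) (pi : seq nat) :
  (1 <= n)%N -> is_perm n pi ->
  (avoids321 pi <-> parallelogram (deco_cells (Phi4 n pi))).
Proof.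
move=> hn hperm; rewrite /Phi4.
case: pickP => [t /andP[hv /eqP hpi] | hnone].
  set c := map val t in hv hpi *.
  have hc : c != [::].
    by rewrite -size_eq0 /c size_map size_tuple; case: n hn {t hv hpi c hperm}.
  have [P1 P2] := @perm_side c hv hc.
  have [hwf hg] := @build_side c hv hc.
  rewrite -hpi; split.
  - move=> hav; apply: geo_to => //; rewrite -hg.
    case hgc: (good c) => //; exfalso; apply: (P2 _) hav; by rewrite hgc.
  - move=> hpar; have := @geo_from _ hwf hpar; rewrite -hg => hgc.
    exact: (P1 hgc).2.
exfalso.
have [c [hs hv hi]] := @exists_code _ _ hperm.
case: n hn hperm hnone hs => [//|n'] _ hperm hnone hs.
have ht : size (map (@inord n') c) == n'.+1 by rewrite size_map hs.
have := hnone (Tuple ht); rewrite /=.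
have -> : map val (map (@inord n') c) = c.
  rewrite -map_comp; apply: map_id_in => x hx /=.
  by rewrite inordK //; rewrite -hs; apply: valid_bound.
by rewrite hv hi eqxx.
Qed.
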